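(* Let $f(x)=\frac1n\sum_{i=1}^n f_i(x)$ where each $f_i:\mathbb{R}^d\to\mathbb{R}$ has Lipschitz continuous gradient with constant $L_{f,i}$, and let $M=\max_i L_{f,i}$ and $r=\frac{2}{1-c_2}$. In the First-Order Stochastic Trust-Region Method described in the context, if at iteration $k$ we have $g_k\neq 0$ and \[ \Delta_k\le\frac{\|g_k\|}{rM}, \] then $\Delta_{k+1}=\min(\nu_2\Delta_k,\bar\Delta)$.
   Context: First-Order Stochastic Trust-Region Method: parameters $\bar\Delta>0$, $\Delta_0\in(0,\bar\Delta)$, $0<c_0\le c_1\le c_2<1$, $\nu_1,\nu_2>1$. At iteration $k$: sample an index $i\in\{1,\dots,n\}$, set $g_k=\nabla f_i(x_k)$; $m_k(p)=g_k^\top p+\frac12\|p\|^2$; $p_k=\arg\min_{\|p\|\le\Delta_k}m_k(p)=-a_kg_k$ with $a_k=1$ if $\|g_k\|\le\Delta_k$ and $a_k=\Delta_k/\|g_k\|$ otherwise; $r_k=\frac{f_i(x_k)-f_i(x_k+p_k)}{m_k(0)-m_k(p_k)}$; $x_{k+1}=x_k+p_k$ if $r_k>c_0$, else $x_{k+1}=x_k$; $\Delta_{k+1}=\Delta_k/\nu_1$ if $r_k<c_1$, $\min(\nu_2\Delta_k,\bar\Delta)$ if $r_k>c_2$, $\Delta_k$ otherwise. *)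

(* Defs.v *)
From HB Require Import structures.
From mathcomp Require Import all_boot all_order all_algebra.
From mathcomp Require Import all_classical all_reals all_analysis.
Set Implicit Arguments. Unset Strict Implicit. Unset Printing Implicit Defensive.
Import Order.TTheory GRing.Theory Num.Theory.
Import numFieldNormedType.Exports.
Local Open Scope ring_scope.

Section TR.
Variables (R : realType) (d : nat).

Definition dotp (u v : 'rV[R]_d) : R := \sum_(j < d) u ord0 j * v ord0 j.
Definition enorm (u : 'rV[R]_d) : R := Num.sqrt (dotp u u).

Definition tr_model (g p : 'rV[R]_d) : R := dotp g p + 2^-1 * enorm p ^+ 2.

Definition tr_alpha (g : 'rV[R]_d) (D : R) : R :=
  if enorm g <= D then 1 else D / enorm g.
Definition tr_step (g : 'rV[R]_d) (D : R) : 'rV[R]_d := - (tr_alpha g D *: g).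

Definition tr_ratio (fi : 'rV[R]_d -> R) (g x : 'rV[R]_d) (D : R) : R :=
  (fi x - fi (x + tr_step g D)) / (tr_model g 0 - tr_model g (tr_step g D)).

Definition tr_update (Dbar c0 c1 c2 nu1 nu2 : R)
    (fi : 'rV[R]_d -> R) (gradi : 'rV[R]_d -> 'rV[R]_d)
    (st : 'rV[R]_d * R) : 'rV[R]_d * R :=
  let: (x, D) := st in
  let g := gradi x in
  let rk := tr_ratio fi g x D in
  let p := tr_step g D in
  (if c0 < rk then x + p else x,
   if rk < c1 then D / nu1
   else if c2 < rk then Num.min (nu2 * D) Dbar else D).

(* the iterates (x_k, Delta_k) for a given realization idx of the sampled
   indices (idx k is the index sampled at iteration k) *)
Fixpoint tr_iter (n : nat) (F : 'I_n -> 'rV[R]_d -> R)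
    (grad : 'I_n -> 'rV[R]_d -> 'rV[R]_d)
    (Dbar c0 c1 c2 nu1 nu2 : R) (idx : nat -> 'I_n)
    (x0 : 'rV[R]_d) (D0 : R) (k : nat) : 'rV[R]_d * R :=
  match k with
  | 0 => (x0, D0)
  | k'.+1 => tr_update Dbar c0 c1 c2 nu1 nu2 (F (idx k')) (grad (idx k'))
               (tr_iter F grad Dbar c0 c1 c2 nu1 nu2 idx x0 D0 k')
  end.

End TR.

(* Main.v *)
Require Import Defs.
From HB Require Import structures.
From mathcomp Require Import all_boot all_order all_algebra.
From mathcomp Require Import all_classical all_reals all_analysis.
From mathcomp Require Import ring lra.
Import Order.TTheory GRing.Theory Num.Theory.
Import numFieldNormedType.Exports.
Local Open Scope ring_scope.

Section S.
Variables (R : realType) (d : nat).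

Lemma line_quot (f : 'rV[R]_d -> R) x p t :
  (fun h : R => h^-1 *: (((fun s : R => f (x + s *: p)) \o shift t) (h *: 1) - (fun s : R => f (x + s *: p)) t))
  = (fun h : R => h^-1 *: ((f \o shift (x + t *: p)) (h *: p) - f (x + t *: p))).
Proof.
apply: funext => h /=; congr (_ *: (_ - _)); congr f.
by rewrite /shift /= [h%:A]mulr1 scalerDl addrCA.
Qed.

Lemma line_derive (f : 'rV[R]_d -> R) x p t :
  differentiable f (x + t *: p) ->
  is_derive t 1 (fun s : R => f (x + s *: p)) ('D_p f (x + t *: p)).
Proof.
move=> df; have dv := @diff_derivable _ _ _ _ _ p df.
split; rewrite /derivable /derive line_quot //. 
Qed.

Lemma dotpE (u v : 'rV[R]_d) : dotp u v = \sum_(j < d) u ord0 j * v ord0 j.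
Proof. by []. Qed.

Lemma dotpC (u v : 'rV[R]_d) : dotp u v = dotp v u.
Proof. by rewrite !dotpE; apply: eq_bigr => j _; rewrite mulrC. Qed.

Lemma dotpZl (a : R) (u v : 'rV[R]_d) : dotp (a *: u) v = a * dotp u v.
Proof. by rewrite !dotpE mulr_sumr; apply: eq_bigr => j _; rewrite !mxE mulrA. Qed.

Lemma dotpNl (u v : 'rV[R]_d) : dotp (- u) v = - dotp u v.
Proof. by rewrite -scaleN1r dotpZl mulN1r. Qed.

Lemma dotpDl (u w v : 'rV[R]_d) : dotp (u + w) v = dotp u v + dotp w v.
Proof. by rewrite !dotpE -big_split; apply: eq_bigr => j _; rewrite !mxE mulrDl. Qed.

Lemma dotpZr (a : R) (u v : 'rV[R]_d) : dotp u (a *: v) = a * dotp u v.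
Proof. by rewrite dotpC dotpZl dotpC. Qed.

Lemma dotpNr (u v : 'rV[R]_d) : dotp u (- v) = - dotp u v.
Proof. by rewrite dotpC dotpNl dotpC. Qed.

Lemma dotp0l (v : 'rV[R]_d) : dotp 0 v = 0.
Proof. by rewrite -(scale0r (0 : 'rV[R]_d)) dotpZl mul0r. Qed.

Lemma dotp_ge0 (u : 'rV[R]_d) : 0 <= dotp u u.
Proof. by rewrite dotpE; apply: sumr_ge0 => j _; rewrite -expr2 sqr_ge0. Qed.

Lemma dotp_eq0 (u : 'rV[R]_d) : dotp u u = 0 -> u = 0.
Proof.
rewrite dotpE => /eqP; rewrite psumr_eq0; last by move=> j _; rewrite -expr2 sqr_ge0.
move=> /allP H; apply/matrixP => i j; rewrite !mxE (ord1 i).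
have := H j (mem_index_enum _); rewrite /= mulf_eq0 orbb => /eqP ->; by [].
Qed.

Lemma enorm_sq (u : 'rV[R]_d) : enorm u ^+ 2 = dotp u u.
Proof. by rewrite /enorm sqr_sqrtr // dotp_ge0. Qed.

Lemma enorm_ge0 (u : 'rV[R]_d) : 0 <= enorm u.
Proof. exact: sqrtr_ge0. Qed.

Lemma enormZ (a : R) (u : 'rV[R]_d) : enorm (a *: u) = `|a| * enorm u.
Proof.
by rewrite /enorm dotpZl dotpZr mulrA -expr2 sqrtrM ?sqr_ge0 // sqrtr_sqr.
Qed.

Lemma enormN (u : 'rV[R]_d) : enorm (- u) = enorm u.
Proof. by rewrite /enorm dotpNl dotpNr opprK. Qed.

Lemma CS (u v : 'rV[R]_d) : dotp u v <= enorm u * enorm v.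
Proof.
have [a0|an0] := eqVneq (enorm u) 0.
  have : dotp u u = 0 by rewrite -enorm_sq a0 expr2 mul0r.
  by move=> /dotp_eq0 u0; rewrite a0 mul0r u0 dotp0l.
have [b0|bn0] := eqVneq (enorm v) 0.
  have : dotp v v = 0 by rewrite -enorm_sq b0 expr2 mul0r.
  by move=> /dotp_eq0 u0; rewrite b0 mulr0 u0 dotpC dotp0l.
set a := enorm u; set b := enorm v.
have ha : 0 < a by rewrite lt0r an0 enorm_ge0.
have hb : 0 < b by rewrite lt0r bn0 enorm_ge0.
have key : 2 * (a * b) * dotp u v <= b ^+ 2 * dotp u u + a ^+ 2 * dotp v v.
  rewrite !dotpE !mulr_sumr -big_split /=; apply: ler_sum => j _.
  set x := u ord0 j; set y := v ord0 j.
  have : 0 <= (b * x - a * y) ^+ 2 by apply: sqr_ge0.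
  by move=> h; nra.
move: key; rewrite -!enorm_sq -/a -/b => key.
have hab : 0 < a * b by apply: mulr_gt0.
nra.
Qed.

Lemma CS' (u v : 'rV[R]_d) : - (enorm u * enorm v) <= dotp u v.
Proof. by rewrite lerNl -dotpNl -(enormN u) CS. Qed.
End S.

Lemma iter_pos (R : realType) (d n : nat)
  (F : 'I_n -> 'rV[R]_d -> R) (grad : 'I_n -> 'rV[R]_d -> 'rV[R]_d)
  (Dbar D0 c0 c1 c2 nu1 nu2 : R)
  (hDbar : 0 < Dbar) (hD0 : 0 < D0) (hnu1 : 1 < nu1) (hnu2 : 1 < nu2)
  (idx : nat -> 'I_n) (x0 : 'rV[R]_d) (k : nat) :
  0 < (tr_iter F grad Dbar c0 c1 c2 nu1 nu2 idx x0 D0 k).2.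
Proof.
elim: k => //= k; rewrite /tr_update.
case: (tr_iter _ _ _ _ _ _ _ _ _ _ _ k) => x D /= HD.
case: ifP => _; first by apply: divr_gt0 => //; lra.
case: ifP => _ //; rewrite lt_min hDbar andbT; apply: mulr_gt0 => //; lra.
Qed.

Theorem lemma4p4 (R : realType) (d n : nat)
  (F : 'I_n -> 'rV[R]_d -> R) (grad : 'I_n -> 'rV[R]_d -> 'rV[R]_d)
  (L : 'I_n -> R)
  (hdiff : forall i x, differentiable (F i) x)
  (hgrad : forall i x v, 'D_v (F i) x = dotp (grad i x) v)
  (hL0 : forall i, 0 <= L i)
  (hLip : forall i x y, enorm (grad i x - grad i y) <= L i * enorm (x - y))
  (Dbar D0 c0 c1 c2 nu1 nu2 : R)
  (hDbar : 0 < Dbar) (hD0 : 0 < D0) (hD0' : D0 < Dbar)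
  (hc0 : 0 < c0) (hc01 : c0 <= c1) (hc12 : c1 <= c2) (hc2 : c2 < 1)
  (hnu1 : 1 < nu1) (hnu2 : 1 < nu2)
  (idx : nat -> 'I_n) (x0 : 'rV[R]_d) (k : nat) :
  let M := \big[Num.max/0]_(j < n) L j in
  let r := 2 / (1 - c2) in
  let st := tr_iter F grad Dbar c0 c1 c2 nu1 nu2 idx x0 D0 k in
  let gk := grad (idx k) st.1 in
  gk != 0 ->
  st.2 <= enorm gk / (r * M) ->
  (tr_iter F grad Dbar c0 c1 c2 nu1 nu2 idx x0 D0 k.+1).2
    = Num.min (nu2 * st.2) Dbar.
Proof.
move=> M r st gk; rewrite /gk /st.
have -> : tr_iter F grad Dbar c0 c1 c2 nu1 nu2 idx x0 D0 k.+1 =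
  tr_update Dbar c0 c1 c2 nu1 nu2 (F (idx k)) (grad (idx k))
    (tr_iter F grad Dbar c0 c1 c2 nu1 nu2 idx x0 D0 k) by [].
have := @iter_pos R d n F grad Dbar D0 c0 c1 c2 nu1 nu2 hDbar hD0 hnu1 hnu2 idx x0 k.
case: (tr_iter _ _ _ _ _ _ _ _ _ _ _ k) => x D /= Dpos hg hD.
rewrite /tr_update.
set i := idx k; set f := F i; set g := grad i x.
set rk := tr_ratio f g x D.
suff hrk : c2 < rk.
  rewrite ifF ?hrk //; apply/negbTE; rewrite -leNgt; apply: (le_trans hc12); exact: ltW.
have e0 : 0 < enorm g.
  rewrite /enorm sqrtr_gt0 lt0r dotp_ge0 andbT; apply/eqP => /dotp_eq0 g0.
  by move: hg; rewrite -/g g0 eqxx.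
set e := enorm g in e0 hD *.
have LM : L i <= M by rewrite /M (bigD1 i) //= le_max lexx.
have M0 : 0 <= M by apply: le_trans (hL0 i) LM.
have w0 : 0 < 1 - c2 by lra.
have r0 : 0 < r by rewrite /r divr_gt0.
have Mpos : 0 < M.
  rewrite lt0r M0 andbT; apply/eqP => M0'; move: hD; rewrite M0' mulr0 invr0 mulr0.
  by rewrite leNgt Dpos.
have DrM : D * (r * M) <= e by rewrite -ler_pdivlMr // mulr_gt0.
set a := tr_alpha g D.
have [a0 a1 ae] : [/\ 0 < a, a <= 1 & a * e <= D].
  rewrite /a /tr_alpha -/e; case: ifP => he.
    by split => //; rewrite mul1r.
  move/negbT: he; rewrite -ltNge => he.
  split; first by rewrite divr_gt0.
    by rewrite ler_pdivrMr // mul1r ltW.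
  by rewrite divfK // gt_eqF.
have raw : r * (1 - c2) = 2 by rewrite /r divfK // gt_eqF.
have haM : 2 * a * M <= 1 - c2.
  have h1 : a * e * (r * M) <= e by apply: le_trans DrM; rewrite ler_pM2r // mulr_gt0.
  have h2 : a * (r * M) <= 1.
    by rewrite -(ler_pM2r e0) mul1r mulrAC.
  have -> : 2 * a * M = a * (r * M) * (1 - c2) by rewrite -raw; ring.
  by move: h2; rewrite -(ler_pM2r w0) mul1r.
have haL : L i * a <= (1 - c2) / 2.
  rewrite ler_pdivlMr //; apply: le_trans haM.
  have : L i * a <= M * a by rewrite ler_pM2r.
  lra.
set p := tr_step g D.
have pE : p = - (a *: g) by [].
have ep : enorm p = a * e by rewrite pE enormN enormZ gtr0_norm.
have LD (s : R) : is_derive s (1:R) (fun s : R => f (x + s *: p)) (dotp (grad i (x + s *: p)) p).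
  by have := @line_derive R d f x p s (hdiff i _); rewrite hgrad.
have [c hc Hmvt] := @MVT R (fun s => f (x + s *: p))
   (fun s => dotp (grad i (x + s *: p)) p) 0 1 ltr01 (fun s _ => LD s)
   (derivable_within_continuous (fun s _ => @ex_derive _ _ _ _ _ _ _ (LD s))).
move: hc; rewrite in_itv /= => /andP[c0' c1'].
move: Hmvt; rewrite scale1r scale0r addr0 subr0 mulr1 => Hmvt.
set y := x + c *: p in Hmvt.
have num : f x - f (x + p) = a * dotp (grad i y) g.
  by rewrite -opprB Hmvt pE dotpNr dotpZr opprK.
have gy : dotp (grad i y) g = dotp (grad i y - g) g + e ^+ 2.
  by rewrite /e enorm_sq -dotpDl subrK.
have cs := @CS' R d (grad i y - g) g.
have lip : enorm (grad i y - g) <= L i * (c * (a * e)).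
  have := hLip i y x; rewrite /y addrAC subrr add0r enormZ gtr0_norm // ep.
  done.
have dec : tr_model g 0 - tr_model g p = a * e ^+ 2 - 2^-1 * (a ^+ 2 * e ^+ 2).
  rewrite /tr_model dotpC dotp0l /enorm dotp0l sqrtr0 expr0n /= mulr0 addr0 sub0r.
  rewrite -/(enorm p) ep pE dotpNr dotpZr -/(enorm g) -enorm_sq -/e; ring.
have e2 : 0 < e ^+ 2 by rewrite exprn_gt0.
have dec0 : 0 < a * e ^+ 2 - 2^-1 * (a ^+ 2 * e ^+ 2).
  have -> : a * e ^+ 2 - 2^-1 * (a ^+ 2 * e ^+ 2) = a * e ^+ 2 * (1 - 2^-1 * a) by ring.
  apply: mulr_gt0; [exact: mulr_gt0 | lra].
rewrite /rk /tr_ratio -/p dec ltr_pdivlMr // num gy.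
set Q := dotp _ g.
have h3 : - (L i * a * e ^+ 2) <= Q.
  apply: le_trans cs; rewrite lerN2.
  have h4 : enorm (grad i y - g) * e <= L i * (c * (a * e)) * e by rewrite ler_wpM2r // ltW.
  apply: (le_trans h4).
  have -> : L i * (c * (a * e)) * e = c * (L i * a * e ^+ 2) by ring.
  apply: ler_piMl; [by rewrite !mulr_ge0 // ?ltW | exact: ltW].
have ca : 0 < c2 * a by rewrite mulr_gt0 //; lra.
have key : c2 * (1 - 2^-1 * a) < 1 - L i * a by lra.
have aeP : 0 < a * e ^+ 2 by apply: mulr_gt0.
have -> : c2 * (a * e ^+ 2 - 2^-1 * (a ^+ 2 * e ^+ 2)) = a * e ^+ 2 * (c2 * (1 - 2^-1 * a)) by ring.
apply: (lt_le_trans (y := a * e ^+ 2 * (1 - L i * a))); first by rewrite ltr_pM2l.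
have -> : a * e ^+ 2 * (1 - L i * a) = a * (e ^+ 2 - L i * a * e ^+ 2) by ring.
by rewrite ler_pM2l //; lra.
Qed.
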